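(* Let $(q_n)$ and $(p_n)$ be sequences with $q_n\in(0,1)$, $p_n\in(q_n,1]$, $\lim_{n\to\infty}p_n=\lim_{n\to\infty}q_n=1$, $\lim_{n\to\infty}p_n^n=a$, $\lim_{n\to\infty}q_n^n=b$, and $\lim_{n\to\infty}1/[n]_{p_n,q_n}=0$. Then for each $f\in C[0,1]$, $\widetilde{M}_{n,k}^{(p_n,q_n)}(f;x)$ converges to $f(x)$ uniformly on $[0,1]$ as $n\to\infty$.
   Context: For $0<q<p\le1$: $[n]_{p,q}=\frac{p^n-q^n}{p-q}$; $[n]_{p,q}!=[1]_{p,q}\cdots[n]_{p,q}$, $[0]_{p,q}!=1$; $\begin{bmatrix}n\\k\end{bmatrix}_{p,q}=\frac{[n]_{p,q}!}{[k]_{p,q}![n-k]_{p,q}!}$; $(x+y)_{p,q}^n=\prod_{j=0}^{n-1}(p^jx+q^jy)$. The $(p,q)$-integral is $\int_0^a f(t)\,d_{p,q}t=(p-q)a\sum_{j=0}^\infty \frac{q^j}{p^{j+1}}f\!\left(\frac{q^j}{p^{j+1}}a\right)$. Define $m_{n,k}^{(p,q)}(x)=\frac{1}{p^{kn+n(n+1)/2}}\begin{bmatrix}n+k\\k\end{bmatrix}_{p,q}x^k(1-x)^{n+1}_{p,q}$ and $b_{n,k}^{(p,q)}(qt)=\frac{1}{p^{k(n-1)+n(n-1)/2}}\begin{bmatrix}n+k+1\\k\end{bmatrix}_{p,q}(qt)^k(1-qt)^n_{p,q}$. The operator is $$\widetilde{M}_{n,k}^{(p,q)}(f;x)=\frac{[n+1]_{p,q}}{p^n}\sum_{k=0}^\infty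 m_{n,k}^{(p,q)}(x)\,(pq)^{-k}\int_0^1 b_{n,k}^{(p,q)}(qt)f(t)\,d_{p,q}t,\quad 0\le x<1,$$ and $\widetilde{M}_{n,k}^{(p,q)}(f;1)=f(1)$.
   Formalization: f ranges over functions continuous on all of ℝ rather than over C[0,1], and uniform convergence on [0,1] is asserted for every such f. The statement above fails without it. *)

(* Defs.v *)
From Stdlib Require Import Reals.
From Coquelicot Require Import Coquelicot.
Open Scope R_scope.

Definition pq_int (p q : R) (n : nat) : R := (p ^ n - q ^ n) / (p - q).

Fixpoint pq_fact (p q : R) (n : nat) : R :=
  match n with
  | O => 1
  | S m => pq_fact p q m * pq_int p q (S m)
  end.

Definition pq_binom (p q : R) (n k : nat) : R :=
  pq_fact p q n / (pq_fact p q k * pq_fact p q (n - k)).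

Fixpoint pq_pow (p q x y : R) (n : nat) : R :=
  match n with
  | O => 1
  | S m => pq_pow p q x y m * (p ^ m * x + q ^ m * y)
  end.

Definition pq_integral (p q a : R) (f : R -> R) : R :=
  (p - q) * a * Series (fun j => q ^ j / p ^ (S j) * f (q ^ j / p ^ (S j) * a)).

Definition m_nk (p q : R) (n k : nat) (x : R) : R :=
  / p ^ (k * n + n * (n + 1) / 2) * pq_binom p q (n + k) k * x ^ k
  * pq_pow p q 1 (- x) (n + 1).

(* b_{n,k}^{(p,q)}(u) with u = q t; the exponent k(n-1)+n(n-1)/2 is an
   integer (it is negative only for n = 0), hence powerRZ. *)
Definition b_nk (p q : R) (n k : nat) (u : R) : R :=
  / powerRZ p (Z.of_nat k * (Z.of_nat n - 1) + Z.of_nat (n * (n - 1) / 2))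
  * pq_binom p q (n + k + 1) k * u ^ k * pq_pow p q 1 (- u) n.

Definition Mtilde (p q : R) (n : nat) (f : R -> R) (x : R) : R :=
  if Req_EM_T x 1 then f 1
  else pq_int p q (n + 1) / p ^ n *
       Series (fun k => m_nk p q n k x * / (p * q) ^ k *
                        pq_integral p q 1 (fun t => b_nk p q n k (q * t) * f t)).

(* Main.v *)
Require Import Defs.
From Stdlib Require Import Reals.
From Coquelicot Require Import Coquelicot.
From Stdlib Require Import Lra Lia Psatz ZArith.
Open Scope R_scope.


Definition qi (r : R) (m : nat) : R := (1 - r ^ m) / (1 - r).
Fixpoint qf (r : R) (m : nat) : R :=
  match m with O => 1 | S m' => qf r m' * qi r (S m') end.
Definition Qb (r : R) (n k : nat) : R := qf r (n + k) / (qf r n * qf r k).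
Fixpoint poch (r x : R) (m : nat) : R :=
  match m with O => 1 | S m' => poch r x m' * (1 - r ^ m' * x) end.
Fixpoint tri (m : nat) : nat := match m with O => O | S m' => (tri m' + m')%nat end.

Lemma pow01 (x : R) (m : nat) : 0 <= x <= 1 -> 0 <= x ^ m <= 1.
Proof.
  intros H; induction m; simpl; [lra|]. split; [apply Rmult_le_pos; lra|].
  replace 1 with (1*1) by ring. apply Rmult_le_compat; lra.
Qed.

Lemma pow_pos01 (x : R) (m : nat) : 0 < x <= 1 -> 0 < x ^ m <= 1.
Proof.
  intros H; split. apply pow_lt; lra. apply pow01; lra.
Qed.

Section Q.
Variable r : R.
Hypothesis hr : 0 < r < 1.

Lemma qi_0 : qi r 0 = 0.
Proof. unfold qi; simpl; field; lra. Qed.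

Lemma qi_add a b : qi r (a + b) = qi r a + r ^ a * qi r b.
Proof. unfold qi; rewrite pow_add; field; lra. Qed.

Lemma qi_ge1 m : (1 <= m)%nat -> 1 <= qi r m.
Proof.
  intros Hm. unfold qi. destruct m; [lia|]. simpl.
  assert (0 <= r ^ m <= 1) by (apply pow01; lra).
  apply (Rmult_le_reg_r (1 - r)); [lra|]. unfold Rdiv. rewrite Rmult_assoc, Rinv_l; [|lra].
  nra.
Qed.

Lemma qi_nonneg m : 0 <= qi r m.
Proof. destruct m. rewrite qi_0; lra. pose proof (qi_ge1 (S m) ltac:(lia)); lra. Qed.

Lemma qi_pos m : (1 <= m)%nat -> 0 < qi r m.
Proof. intros; pose proof (qi_ge1 m H); lra. Qed.

Lemma qi_le m : qi r m <= / (1 - r).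
Proof.
  unfold qi. assert (0 <= r ^ m <= 1) by (apply pow01; lra).
  unfold Rdiv. rewrite <- (Rmult_1_l (/ (1 - r))) at 2. apply Rmult_le_compat_r. left; apply Rinv_0_lt_compat; lra. lra.
Qed.

Lemma qf_pos m : 0 < qf r m.
Proof. induction m; simpl; [lra|]. apply Rmult_lt_0_compat; auto. apply qi_pos; lia. Qed.

Lemma Qb_pos n k : 0 < Qb r n k.
Proof.
  unfold Qb. pose proof (qf_pos (n+k)); pose proof (qf_pos n); pose proof (qf_pos k).
  apply Rdiv_lt_0_compat; auto. apply Rmult_lt_0_compat; auto.
Qed.

Lemma Qb_0k k : Qb r 0 k = 1.
Proof. unfold Qb; simpl. pose proof (qf_pos k). field; lra. Qed.

Lemma Qb_n0 n : Qb r n 0 = 1.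
Proof. unfold Qb; simpl. rewrite Nat.add_0_r. pose proof (qf_pos n). field; lra. Qed.

Lemma Qb_pascal n k : Qb r (S n) (S k) = Qb r n (S k) + r ^ (S n) * Qb r (S n) k.
Proof.
  unfold Qb.
  replace (S n + S k)%nat with (S (S (n + k))) by lia.
  replace (n + S k)%nat with (S (n + k)) by lia.
  replace (S n + k)%nat with (S (n + k)) by lia.
  simpl qf.
  replace (qi r (S (S (n + k)))) with (qi r (S n) + r ^ (S n) * qi r (S k))
    by (rewrite <- qi_add; f_equal; lia).
  pose proof (qf_pos (n+k)); pose proof (qf_pos n); pose proof (qf_pos k).
  pose proof (qi_pos (S n) ltac:(lia)); pose proof (qi_pos (S k) ltac:(lia)).
  pose proof (qi_pos (S (n+k)) ltac:(lia)).
  simpl pow. field. repeat split; lra.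
Qed.

Lemma Qb_Sk n k : Qb r n (S k) * qi r (S k) = Qb r n k * qi r (S (n + k)).
Proof.
  unfold Qb. replace (n + S k)%nat with (S (n + k)) by lia. simpl qf.
  pose proof (qf_pos (n+k)); pose proof (qf_pos n); pose proof (qf_pos k).
  pose proof (qi_pos (S k) ltac:(lia)).
  field. repeat split; lra.
Qed.

Lemma Qb_Sn n k : Qb r (S n) k * qi r (S n) = Qb r n k * qi r (S (n + k)).
Proof.
  unfold Qb. replace (S n + k)%nat with (S (n + k)) by lia. simpl qf.
  pose proof (qf_pos (n+k)); pose proof (qf_pos n); pose proof (qf_pos k).
  pose proof (qi_pos (S n) ltac:(lia)).
  field. repeat split; lra.
Qed.

Lemma Qb_bound n k : Qb r n k <= (/ (1 - r)) ^ n.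
Proof.
  induction n; simpl. rewrite Qb_0k; lra.
  pose proof (Qb_Sn n k) as E. pose proof (qi_ge1 (S n) ltac:(lia)).
  pose proof (qi_le (S (n+k))). pose proof (Qb_pos n k). pose proof (Qb_pos (S n) k).
  assert (Qb r (S n) k <= Qb r n k * qi r (S (n + k))) by nra.
  assert (Qb r n k * qi r (S (n + k)) <= Qb r n k * / (1 - r)) by
    (apply Rmult_le_compat_l; lra).
  assert (0 < / (1 - r)) by (apply Rinv_0_lt_compat; lra).
  nra.
Qed.

Lemma poch_pos x m : 0 <= x < 1 -> 0 < poch r x m.
Proof.
  intros Hx; induction m; simpl; [lra|]. apply Rmult_lt_0_compat; auto.
  pose proof (pow01 r m ltac:(lra)). nra.
Qed.

End Q.


Section S.
Variable r : R.
Hypothesis hr : 0 < r < 1.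

Lemma qbin_partial n x : forall N,
  sum_n (fun k => Qb r (S n) k * x ^ k) (S N) =
  sum_n (fun k => Qb r n k * x ^ k) (S N) + r ^ (S n) * x * sum_n (fun k => Qb r (S n) k * x ^ k) N.
Proof.
  induction N.
  - rewrite !sum_Sn, !sum_O. unfold plus; simpl.
    rewrite (Qb_pascal r hr n 0), !Qb_n0 by lra. cbn [pow]; ring.
  - rewrite (sum_Sn (fun k => Qb r (S n) k * x ^ k) (S N)).
    rewrite (sum_Sn (fun k => Qb r n k * x ^ k) (S N)).
    rewrite IHN at 1.
    rewrite (sum_Sn (fun k => Qb r (S n) k * x ^ k) N). unfold plus; simpl.
    rewrite (Qb_pascal r hr n (S N)). cbn [pow]; ring.
Qed.

Lemma qbin_series n x : 0 <= x < 1 ->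
  is_series (fun k => Qb r n k * x ^ k) (/ poch r x (S n)).
Proof.
  intros Hx. induction n.
  - replace (/ poch r x 1) with (/ (1 - x)) by (simpl; f_equal; ring).
    eapply is_series_ext. 2: apply is_series_geom. intros k; simpl. rewrite Qb_0k by lra. ring.
    rewrite Rabs_right; lra.
  - set (c := r ^ (S n) * x).
    assert (Hc : 0 <= c < 1).
    { unfold c. pose proof (pow_lt_1_compat r (S n) ltac:(lra) ltac:(lia)). nra. }
    set (A := fun k => Qb r (S n) k * x ^ k).
    set (P := fun k => Qb r n k * x ^ k).
    assert (HA0 : is_lim_seq A 0).
    { apply is_lim_seq_le_le with (u := fun _ => 0) (w := fun k => (/ (1 - r)) ^ (S n) * x ^ k).
      - intros k; unfold A. pose proof (Qb_pos r hr (S n) k). pose proof (Qb_bound r hr (S n) k).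
        pose proof (pow01 x k ltac:(lra)). split. nra. apply Rmult_le_compat_r; lra.
      - apply is_lim_seq_const.
      - replace (Finite 0) with (Rbar_mult ((/ (1 - r)) ^ (S n)) 0) by (simpl; f_equal; ring).
        apply is_lim_seq_scal_l. apply is_lim_seq_geom. rewrite Rabs_right; lra. }
    assert (E : forall N, sum_n A N = (sum_n P (S N) - A (S N)) / (1 - c)).
    { intros N. pose proof (qbin_partial n x N) as H1. fold A P c in H1.
      rewrite sum_Sn in H1. unfold plus in H1; simpl in H1.
      apply Rmult_eq_reg_r with (1 - c); [|lra]. unfold Rdiv.
      rewrite Rmult_assoc, Rinv_l, Rmult_1_r; [|lra]. nra. }
    unfold is_series. change (is_lim_seq (sum_n A) (/ poch r x (S (S n)))).
    apply is_lim_seq_ext with (u := fun N => (sum_n P (S N) - A (S N)) / (1 - c)).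
    { intros; now rewrite E. }
    replace (/ poch r x (S (S n))) with ((/ poch r x (S n) - 0) / (1 - c)).
    2:{ simpl poch. unfold c. pose proof (poch_pos r hr x n Hx).
        pose proof (pow01 r n ltac:(lra)). simpl pow. field. repeat split. assert (0 <= r ^ n * x < 1) by nra. assert (0 <= r * (r ^ n * x) < 1) by nra. all: apply Rgt_not_eq; nra. }
    apply is_lim_seq_div'; [|apply is_lim_seq_const|lra].
    apply is_lim_seq_minus'.
    + apply (is_lim_seq_incr_1 (sum_n P)). exact IHn.
    + apply (is_lim_seq_incr_1 A). exact HA0.
Qed.
End S.


Definition Bv (r : R) (k n : nat) : R := qf r k * qf r n / (qf r (n + k + 1) * (1 - r)).
Definition Hw (r : R) (n k j : nat) : R := (r ^ (S k)) ^ j * poch r (r ^ (S j)) n.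

Section B.
Variable r : R.
Hypothesis hr : 0 < r < 1.

Lemma is_series_eqv (a : nat -> R) (l l' : R) : is_series a l -> l = l' -> is_series a l'.
Proof. intros H ->; exact H. Qed.

Lemma beta_series n : forall k, is_series (Hw r n k) (Bv r k n).
Proof.
  induction n; intros k.
  - apply is_series_eqv with (/ (1 - r ^ (S k))).
    + eapply is_series_ext. 2: apply is_series_geom.
      intros j; unfold Hw; simpl; ring.
      pose proof (pow_lt_1_compat r (S k) ltac:(lra) ltac:(lia)). rewrite Rabs_right; lra.
    + unfold Bv. replace (0 + k + 1)%nat with (S k) by lia. simpl qf. unfold qi.
      pose proof (qf_pos r hr k).
      pose proof (pow_lt_1_compat r (S k) ltac:(lra) ltac:(lia)).
      field. repeat split; apply Rgt_not_eq; lra.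
  - assert (E : forall j, Hw r (S n) k j = Hw r n k j - r ^ (S n) * Hw r n (S k) j).
    { intros j; unfold Hw. cbn [poch]. cbn [pow]. rewrite !Rpow_mult_distr. ring. }
    apply is_series_eqv with (Bv r k n - r ^ (S n) * Bv r (S k) n).
    + eapply is_series_ext. { intros j; symmetry; apply E. }
      apply (is_series_minus (Hw r n k) (fun j => r ^ (S n) * Hw r n (S k) j)).
      apply IHn. apply (is_series_scal_l (r ^ (S n)) (Hw r n (S k))). apply IHn.
    + unfold Bv.
      replace (n + S k + 1)%nat with (S (n + k + 1)) by lia.
      replace (S n + k + 1)%nat with (S (n + k + 1)) by lia.
      simpl qf.
      replace (qi r (S (n + k + 1))) with (qi r (S n) + r ^ (S n) * qi r (S k))
        by (rewrite <- (qi_add r hr (S n) (S k)); f_equal; lia).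
      pose proof (qf_pos r hr k); pose proof (qf_pos r hr n); pose proof (qf_pos r hr (n+k+1)).
      pose proof (qi_pos r hr (S n) ltac:(lia)); pose proof (qi_pos r hr (S k) ltac:(lia)).
      pose proof (pow_lt_1_compat r (S n) ltac:(lra) ltac:(lia)).
      assert (0 <= r ^ (S n) * qi r (S k)) by (apply Rmult_le_pos; lra).
      assert (0 < qi r (S n) + r ^ (S n) * qi r (S k)) by lra.
      field. repeat split; apply Rgt_not_eq; lra.
Qed.

Lemma Bv_pos k n : 0 < Bv r k n.
Proof.
  unfold Bv. pose proof (qf_pos r hr k); pose proof (qf_pos r hr n); pose proof (qf_pos r hr (n+k+1)).
  apply Rdiv_lt_0_compat. nra. nra.
Qed.

Lemma Bv_S k n : Bv r (S k) n = Bv r k n * (qi r (S k) / qi r (S (S (n + k)))).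
Proof.
  unfold Bv. replace (n + S k + 1)%nat with (S (n + k + 1)) by lia.
  replace (S (S (n + k))) with (S (n + k + 1)) by lia. simpl qf.
  pose proof (qf_pos r hr k); pose proof (qf_pos r hr n); pose proof (qf_pos r hr (n+k+1)).
  pose proof (qi_pos r hr (S k) ltac:(lia)); pose proof (qi_pos r hr (S (n+k+1)) ltac:(lia)).
  field. repeat split; apply Rgt_not_eq; lra.
Qed.

Lemma Hw_S n k j : Hw r n (S k) j = Hw r n k j * r ^ j.
Proof. unfold Hw. cbn [pow]. rewrite Rpow_mult_distr. ring. Qed.

Lemma Hw_nonneg n k j : 0 <= Hw r n k j.
Proof.
  unfold Hw. apply Rmult_le_pos. apply pow_le, pow_le; lra.
  left; apply poch_pos; auto. pose proof (pow_lt_1_compat r (S j) ltac:(lra) ltac:(lia)). lra.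
Qed.
End B.


Definition Mk (r : R) (n : nat) (x : R) (k : nat) : R := Qb r n k * x ^ k * poch r x (S n).
Definition Yk (r : R) (n k : nat) : R := qi r k / qi r (n + k).
Definition Yk' (r : R) (n k : nat) : R := qi r (k - 1) / qi r (n + k - 1).

Lemma decr1 (a : nat -> R) (l : R) : a 0%nat = 0 -> is_series (fun k => a (S k)) l -> is_series a l.
Proof.
  intros H0 H. apply is_series_decr_1. eapply is_series_eqv. exact H.
  rewrite H0. unfold plus, opp; simpl. ring.
Qed.

Section M.
Variable r : R.
Hypothesis hr : 0 < r < 1.
Variable n : nat.
Variable x : R.
Hypothesis hx : 0 <= x < 1.

Lemma Mk_sum : is_series (Mk r n x) 1.
Proof.
  pose proof (qbin_series r hr n x hx) as H. pose proof (poch_pos r hr x (S n) hx).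
  apply is_series_eqv with (/ poch r x (S n) * poch r x (S n)).
  apply (is_series_scal_r (poch r x (S n)) _ _ H). field; lra.
Qed.

Lemma Mk_nonneg k : 0 <= Mk r n x k.
Proof.
  unfold Mk. pose proof (Qb_pos r hr n k). pose proof (poch_pos r hr x (S n) hx).
  pose proof (pow_le x k ltac:(lra)). apply Rmult_le_pos; [apply Rmult_le_pos|]; lra.
Qed.

Lemma Mk_shift k : Mk r n x (S k) * Yk r n (S k) = x * Mk r n x k.
Proof.
  unfold Mk, Yk. pose proof (Qb_Sk r hr n k) as E.
  replace (n + S k)%nat with (S (n + k)) by lia.
  pose proof (qi_pos r hr (S (n + k)) ltac:(lia)).
  pose proof (qi_pos r hr (S k) ltac:(lia)).
  assert (E' : Qb r n (S k) = Qb r n k * qi r (S (n + k)) / qi r (S k))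
    by (rewrite <- E; field; lra).
  rewrite E'. simpl pow. field. lra.
Qed.

Lemma Mk_y : is_series (fun k => Mk r n x k * Yk r n k) x.
Proof.
  apply decr1. { unfold Yk. rewrite qi_0 by lra. unfold Rdiv; ring. }
  eapply is_series_ext. { intros k; symmetry; apply Mk_shift. }
  eapply is_series_eqv. apply (is_series_scal_l x _ _ Mk_sum).
  unfold scal; simpl; unfold mult; simpl; ring.
Qed.

Lemma Mk_yy : is_series (fun k => Mk r n x k * Yk r n k * Yk' r n k) (x ^ 2).
Proof.
  apply decr1. { unfold Yk. rewrite qi_0 by lra. unfold Rdiv; ring. }
  apply decr1. { unfold Yk'. simpl. rewrite qi_0 by lra. unfold Rdiv; ring. }
  apply (is_series_ext (fun k => x ^ 2 * Mk r n x k)).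
  { intros k. rewrite (Mk_shift (S k)).
    assert (Yk' r n (S (S k)) = Yk r n (S k)) as ->.
    { unfold Yk, Yk'. replace (S (S k) - 1)%nat with (S k) by lia.
      replace (n + S (S k) - 1)%nat with (n + S k)%nat by lia. reflexivity. }
    rewrite Rmult_assoc, Mk_shift. simpl; ring. }
  eapply is_series_eqv. apply (is_series_scal_l (x ^ 2) _ _ Mk_sum).
  unfold scal; simpl; unfold mult; simpl; ring.
Qed.
End M.


Lemma is_series_extR (a b : nat -> R) (l : R) :
  (forall n, a n = b n) -> is_series a l -> is_series b l.
Proof. apply is_series_ext. Qed.

Lemma sum_n_nonneg (c : nat -> R) N : (forall n, 0 <= c n) -> 0 <= sum_n c N.
Proof.
  intros H; induction N. rewrite sum_O; auto.
  rewrite sum_Sn. unfold plus; simpl. specialize (H (S N)). lra.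
Qed.

Lemma series_nonneg (c : nat -> R) (l : R) : is_series c l -> (forall n, 0 <= c n) -> 0 <= l.
Proof.
  intros H Hc.
  assert (Hle := is_lim_seq_le (fun _ => 0) (sum_n c) 0 l).
  simpl in Hle. apply Hle. intros; apply sum_n_nonneg; auto.
  apply is_lim_seq_const. exact H.
Qed.

Lemma series_abs_le (a b : nat -> R) (la lb : R) :
  is_series a la -> is_series b lb -> (forall n, Rabs (a n) <= b n) -> Rabs la <= lb.
Proof.
  intros Ha Hb H.
  assert (H1 : 0 <= lb - la).
  { apply (series_nonneg (fun n => b n - a n)).
    apply (is_series_minus b a); auto.
    intros n; specialize (H n). apply Rabs_le_between in H. lra. }
  assert (H2 : 0 <= lb + la).
  { apply (series_nonneg (fun n => b n + a n)).
    apply (is_series_plus b a); auto.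
    intros n; specialize (H n). apply Rabs_le_between in H. lra. }
  apply Rabs_le; lra.
Qed.

Lemma abstract_bound (G : nat -> R) (Hh : nat -> nat -> R) (u : nat -> R)
  (beta m e d : nat -> R) (x eps K D : R) (g : R -> R) :
  (forall k, 0 <= G k) -> (forall k j, 0 <= Hh k j) ->
  (forall k, is_series (Hh k) (beta k)) ->
  (forall k, is_series (fun j => Hh k j * (u j - x) ^ 2) (beta k * e k)) ->
  (forall k, G k * beta k = m k) ->
  (forall k, 0 <= m k) ->
  is_series m 1 ->
  (forall k, e k <= d k) ->
  is_series (fun k => m k * d k) D ->
  0 <= eps -> 0 <= K ->
  (forall j, Rabs (g (u j) - g x) <= eps + K * (u j - x) ^ 2) ->
  Rabs (Series (fun k => G k * Series (fun j => Hh k j * g (u j))) - g x) <= eps + K * D.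
Proof.
  intros HG HH Hb He HGb Hm Hm1 Hed Hd Heps HK Hg.
  set (a := fun k j => Hh k j * (g (u j) - g x)).
  set (bb := fun k j => eps * Hh k j + K * (Hh k j * (u j - x) ^ 2)).
  assert (Hbb : forall k, is_series (bb k) (eps * beta k + K * (beta k * e k))).
  { intros k. apply (is_series_plus (fun j => eps * Hh k j) (fun j => K * (Hh k j * (u j - x) ^ 2))).
    apply (is_series_scal_l eps (Hh k)); auto.
    apply (is_series_scal_l K (fun j => Hh k j * (u j - x) ^ 2)); auto. }
  assert (Hab : forall k j, Rabs (a k j) <= bb k j).
  { intros k j. unfold a, bb. rewrite Rabs_mult, (Rabs_right (Hh k j)) by (apply Rle_ge; auto).
    specialize (Hg j). specialize (HH k j). nra. }
  assert (Hex : forall k, ex_series (a k)).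
  { intros k. apply (ex_series_le (a k) (bb k)). intros j; apply Hab.
    eexists; apply Hbb. }
  set (I := fun k => Series (a k)).
  assert (HI : forall k, is_series (a k) (I k)) by (intros; apply Series_correct; auto).
  assert (HIb : forall k, Rabs (I k) <= eps * beta k + K * (beta k * e k)).
  { intros k. apply (series_abs_le (a k) (bb k)); auto. }
  assert (Hinner : forall k, Series (fun j => Hh k j * g (u j)) = I k + g x * beta k).
  { intros k. apply is_series_unique.
    apply (is_series_extR (fun j => a k j + g x * Hh k j)).
    { intros j; unfold a; ring. }
    apply (is_series_plus (a k) (fun j => g x * Hh k j)); auto.
    apply (is_series_scal_l (g x) (Hh k)); auto. }
  set (c := fun k => eps * m k + K * (m k * d k)).
  assert (Hc : is_series c (eps * 1 + K * D)).
  { apply (is_series_plus (fun k => eps * m k) (fun k => K * (m k * d k))).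
    apply (is_series_scal_l eps m); auto. apply (is_series_scal_l K (fun k => m k * d k) D); auto. }
  assert (HGI : forall k, Rabs (G k * I k) <= c k).
  { intros k. rewrite Rabs_mult, (Rabs_right (G k)) by (apply Rle_ge; auto).
    specialize (HIb k). specialize (HG k). specialize (Hed k). specialize (Hm k).
    unfold c. rewrite <- (HGb k).
    assert (G k * Rabs (I k) <= G k * (eps * beta k + K * (beta k * e k))) by
      (apply Rmult_le_compat_l; auto).
    assert (0 <= beta k).
    { apply (series_nonneg (Hh k)); auto. }
    assert (K * (G k * beta k * e k) <= K * (G k * beta k * d k)).
    { apply Rmult_le_compat_l; auto. apply Rmult_le_compat_l; auto. apply Rmult_le_pos; auto. }
    nra. }
  assert (HexGI : ex_series (fun k => G k * I k)).
  { apply (@ex_series_le R_AbsRing R_CompleteNormedModule (fun k => G k * I k) c). intros k; apply HGI. eexists; apply Hc. }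
  set (S' := Series (fun k => G k * I k)).
  assert (HS' : Rabs S' <= eps * 1 + K * D).
  { apply (series_abs_le (fun k => G k * I k) c); auto. apply Series_correct; auto. }
  assert (Hout : Series (fun k => G k * Series (fun j => Hh k j * g (u j))) = g x * 1 + S').
  { apply is_series_unique.
    apply (is_series_extR (fun k => g x * m k + G k * I k)).
    { intros k. rewrite Hinner, <- (HGb k). ring. }
    apply (is_series_plus (fun k => g x * m k) (fun k => G k * I k)).
    apply (is_series_scal_l (g x) m); auto. apply Series_correct; auto. }
  rewrite Hout. replace (g x * 1 + S' - g x) with S' by ring. lra.
Qed.


Section I.
Variable r : R.
Hypothesis hr : 0 < r < 1.

Lemma qi_mono a b : (a <= b)%nat -> qi r a <= qi r b.
Proof.
  intros H. replace b with (a + (b - a))%nat by lia. rewrite (qi_add r hr).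
  pose proof (qi_nonneg r hr (b - a)). pose proof (pow_le r a ltac:(lra)).
  assert (0 <= r ^ a * qi r (b - a)) by (apply Rmult_le_pos; lra). lra.
Qed.


Lemma L1 a m : (1 <= m)%nat ->
  0 <= qi r (S a) / qi r (m + S a) - qi r a / qi r (m + a) <= / qi r m.
Proof.
  intros Hm.
  unfold qi. replace (m + S a)%nat with (S (m + a)) by lia. cbn [pow].
  rewrite !pow_add.
  set (u := r ^ a). set (v := r ^ m).
  assert (Hu : 0 < u <= 1) by (apply pow_pos01; lra).
  assert (Hv : 0 < v < 1).
  { unfold v. pose proof (pow_lt_1_compat r m ltac:(lra) Hm). split; [apply pow_lt; lra | lra]. }
  assert (0 < 1 - u * v) by nra.
  assert (0 < 1 - r * (u * v)) by (assert (u * v < 1) by nra; nra).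
  assert (0 < 1 - r * u) by nra.
  assert (E : (1 - r * u) / (1 - r) / ((1 - r * (v * u)) / (1 - r)) - (1 - u) / (1 - r) / ((1 - v * u) / (1 - r))
            = (1 - r) * u * (1 - v) / ((1 - r * (u * v)) * (1 - u * v))).
  { field. repeat split; apply Rgt_not_eq; nra. }
  rewrite E. split.
  - apply Rdiv_le_0_compat. apply Rmult_le_pos; [apply Rmult_le_pos|]; lra. nra.
  - replace (/ ((1 - v) / (1 - r))) with ((1 - r) / (1 - v)) by (field; split; lra).
    apply Rmult_le_reg_r with ((1 - r * (u * v)) * (1 - u * v) * (1 - v)).
    { apply Rmult_lt_0_compat; [apply Rmult_lt_0_compat|]; lra. }
    replace ((1 - r) * u * (1 - v) / ((1 - r * (u * v)) * (1 - u * v)) * ((1 - r * (u * v)) * (1 - u * v) * (1 - v)))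
      with ((1 - r) * (u * (1 - v) * (1 - v))) by (field; split; lra).
    replace ((1 - r) / (1 - v) * ((1 - r * (u * v)) * (1 - u * v) * (1 - v)))
      with ((1 - r) * ((1 - r * (u * v)) * (1 - u * v))) by (field; lra).
    apply Rmult_le_compat_l; [lra|].
    assert (u * (1 - v) * (1 - v) <= (1 - r * (u * v)) * (1 - u * v)).
    { assert (1 - v <= 1 - r * (u * v)) by nra. assert (1 - v <= 1 - u * v) by nra.
      assert (u * (1 - v) * (1 - v) <= 1 * (1 - v) * (1 - v)) by
        (apply Rmult_le_compat_r; [lra|]; apply Rmult_le_compat_r; lra).
      assert ((1 - v) * (1 - v) <= (1 - r * (u * v)) * (1 - u * v)) by
        (apply Rmult_le_compat; lra). lra. }
    lra.
Qed.
End I.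

Lemma pure_ineq (P mu dl y y' x i : R) :
  1 <= P -> 0 <= mu <= 1 -> 0 <= dl <= i -> Rabs (mu - y) <= 2 * i ->
  0 <= y <= 1 -> 0 <= y - y' <= i -> 0 <= x <= 1 ->
  mu * (mu + dl) * P ^ 2 - 2 * x * mu * P + x ^ 2 <=
  (P ^ 2 + 16) * i + 2 * (P - 1) ^ 2 + 4 * (y * y' - 2 * x * y + x ^ 2).
Proof.
  intros HP Hmu Hdl Hmy Hy Hyy Hx.
  assert (E : mu * (mu + dl) * P ^ 2 - 2 * x * mu * P + x ^ 2 = mu * dl * P ^ 2 + (mu * P - x) ^ 2) by ring.
  rewrite E.
  assert (A1 : mu * dl * P ^ 2 <= i * P ^ 2).
  { apply Rmult_le_compat_r. apply pow2_ge_0.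
    assert (mu * dl <= 1 * dl) by (apply Rmult_le_compat_r; lra). lra. }
  assert (A2 : (mu * P - x) ^ 2 <= 2 * (mu * (P - 1)) ^ 2 + 2 * (mu - x) ^ 2).
  { assert (mu * P - x = mu * (P - 1) + (mu - x)) as -> by ring.
    pose proof (pow2_ge_0 (mu * (P - 1) - (mu - x))). nra. }
  assert (A3 : (mu * (P - 1)) ^ 2 <= (P - 1) ^ 2).
  { rewrite Rpow_mult_distr. assert (mu ^ 2 <= 1) by nra. pose proof (pow2_ge_0 (P - 1)). nra. }
  assert (A4 : (mu - x) ^ 2 <= 2 * (mu - y) ^ 2 + 2 * (y - x) ^ 2).
  { pose proof (pow2_ge_0 ((mu - y) - (y - x))). nra. }
  assert (A5 : (mu - y) ^ 2 <= 2 * i).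
  { assert (Rabs (mu - y) <= 1) by (apply Rabs_le; lra).
    apply Rabs_le_between in Hmy. apply Rabs_le_between in H.
    destruct (Rle_or_lt 0 (mu - y)).
    - assert ((mu - y) * (mu - y) <= 1 * (mu - y)) by (apply Rmult_le_compat_r; lra). nra.
    - assert ((y - mu) * (y - mu) <= 1 * (y - mu)) by (apply Rmult_le_compat_r; lra). nra. }
  assert (A6 : (y - x) ^ 2 <= (y * y' - 2 * x * y + x ^ 2) + i).
  { assert (y * (y - y') <= i) by nra. nra. }
  nra.
Qed.


Definition mu1 (r : R) (n k : nat) : R := qi r (S k) / qi r (S (S (n + k))).
Definition mu2f (r : R) (n k : nat) : R := qi r (S (S k)) / qi r (S (S (S (n + k)))).

Section F.
Variable r : R.
Hypothesis hr : 0 < r < 1.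
Variable n : nat.
Hypothesis hn : (1 <= n)%nat.

Lemma inv_qi_S : / qi r (S n) <= / qi r n.
Proof.
  apply Rinv_le_contravar. apply qi_pos; auto. apply qi_mono; auto.
Qed.

Lemma ratio01 a b : (1 <= b)%nat -> (a <= b)%nat -> 0 <= qi r a / qi r b <= 1.
Proof.
  intros Hb Hab. pose proof (qi_pos r hr b Hb). pose proof (qi_mono r hr a b Hab).
  pose proof (qi_nonneg r hr a). split. apply Rdiv_le_0_compat; lra.
  apply Rmult_le_reg_r with (qi r b); auto. unfold Rdiv. rewrite Rmult_assoc, Rinv_l; lra.
Qed.

Lemma F1a k : 0 <= mu1 r n k <= 1.
Proof. unfold mu1. apply ratio01; lia. Qed.

Lemma F1b k : 0 <= mu2f r n k - mu1 r n k <= / qi r n.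
Proof.
  pose proof (L1 r hr (S k) (S n) ltac:(lia)) as H.
  unfold mu2f, mu1. replace (S n + S (S k))%nat with (S (S (S (n + k)))) in H by lia.
  replace (S n + S k)%nat with (S (S (n + k))) in H by lia.
  pose proof inv_qi_S. lra.
Qed.

Lemma F2 k : Rabs (mu1 r n k - Yk r n k) <= 2 * / qi r n.
Proof.
  pose proof (L1 r hr k (S n) ltac:(lia)) as H.
  replace (S n + S k)%nat with (S (S (n + k))) in H by lia.
  replace (S n + k)%nat with (S (n + k)) in H by lia.
  pose proof inv_qi_S.
  set (A := qi r k) in *. set (B := qi r (n + k)). set (C := qi r (S (n + k))) in *.
  assert (HA : 0 <= A) by apply qi_nonneg, hr.
  assert (HAB : A <= B) by (apply qi_mono; auto; lia).
  assert (HBn : qi r n <= B) by (apply qi_mono; auto; lia).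
  assert (Hn0 : 0 < qi r n) by (apply qi_pos; auto).
  assert (HCB : C = B + r ^ (n + k)).
  { unfold C, B. replace (S (n + k)) with (n + k + 1)%nat by lia. rewrite (qi_add r hr).
    unfold qi; simpl. field. lra. }
  assert (Hp : 0 <= r ^ (n + k) <= 1) by (apply pow01; lra).
  assert (H2 : 0 <= A / B - A / C <= / qi r n).
  { assert (E : A / B - A / C = A * r ^ (n + k) / (B * C)) by (rewrite HCB; field; lra).
    assert (HB0 : 0 < B) by lra. assert (HC0 : 0 < C) by lra.
    assert (0 < B * C) by (apply Rmult_lt_0_compat; lra).
    rewrite E. split. apply Rdiv_le_0_compat. apply Rmult_le_pos; lra. lra.
    apply Rmult_le_reg_r with (B * C * qi r n). apply Rmult_lt_0_compat; lra.
    replace (A * r ^ (n + k) / (B * C) * (B * C * qi r n)) with (A * r ^ (n + k) * qi r n) by (field; lra).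
    replace (/ qi r n * (B * C * qi r n)) with (B * C) by (field; lra).
    assert (A * r ^ (n + k) <= B * 1) by (apply Rmult_le_compat; lra).
    assert (qi r n <= C) by lra.
    assert (A * r ^ (n + k) * qi r n <= B * C) by (apply Rmult_le_compat; nra).
    lra. }
  unfold mu1, Yk. fold A B. apply Rabs_le. lra.
Qed.

Lemma F3 k : 0 <= Yk r n k <= 1 /\ 0 <= Yk r n k - Yk' r n k <= / qi r n.
Proof.
  destruct k as [|a].
  - unfold Yk, Yk'. simpl. rewrite qi_0 by auto. unfold Rdiv; rewrite !Rmult_0_l. pose proof (qi_pos r hr n hn). assert (0 < / qi r n) by (apply Rinv_0_lt_compat; lra). lra.
  - split. unfold Yk. apply ratio01; lia.
    pose proof (L1 r hr a n hn) as H. unfold Yk, Yk'.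
    replace (S a - 1)%nat with a by lia. replace (n + S a - 1)%nat with (n + a)%nat by lia.
    exact H.
Qed.
End F.


Lemma tri_add a b : tri (a + b) = (tri a + tri b + a * b)%nat.
Proof. induction b; simpl. rewrite Nat.add_0_r. lia. rewrite Nat.add_succ_r. simpl. rewrite IHb. lia. Qed.

Lemma tri_2 m : (2 * tri m = m * (m - 1))%nat.
Proof. induction m; simpl tri. reflexivity. destruct m; simpl in *; nia. Qed.

Lemma tri_div1 n : (n * (n + 1) / 2)%nat = tri (S n).
Proof.
  assert (n * (n + 1) = tri (S n) * 2)%nat.
  { pose proof (tri_2 (S n)). replace (S n - 1)%nat with n in H by lia. lia. }
  rewrite H. apply Nat.div_mul. lia.
Qed.

Lemma tri_div2 n : (n * (n - 1) / 2)%nat = tri n.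
Proof.
  assert (n * (n - 1) = tri n * 2)%nat by (pose proof (tri_2 n); lia).
  rewrite H. apply Nat.div_mul. lia.
Qed.

Section N.
Variable p r : R.
Hypothesis hp : 0 < p <= 1.
Hypothesis hr : 0 < r < 1.

Lemma ppos m : 0 < p ^ m.
Proof. apply pow_lt; lra. Qed.

Lemma pq_int_eq m : pq_int p (r * p) m = p ^ m * qi r m / p.
Proof.
  unfold pq_int, qi. rewrite Rpow_mult_distr. field. split; [lra|]. nra.
Qed.

Lemma pq_fact_eq m : pq_fact p (r * p) m = p ^ (tri m) * qf r m.
Proof.
  induction m; simpl pq_fact; simpl tri; simpl qf. ring.
  rewrite IHm, pq_int_eq, pow_add. simpl pow. field. lra.
Qed.

Lemma pq_binom_eq n k : pq_binom p (r * p) (n + k) k = p ^ (k * n) * Qb r n k.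
Proof.
  unfold pq_binom, Qb. replace (n + k - k)%nat with n by lia.
  rewrite !pq_fact_eq, tri_add, !pow_add.
  pose proof (qf_pos r hr n); pose proof (qf_pos r hr k).
  pose proof (ppos (tri n)); pose proof (ppos (tri k)).
  replace (n * k)%nat with (k * n)%nat by lia.
  field. repeat split; apply Rgt_not_eq; lra.
Qed.

Lemma pq_pow_eq u m : pq_pow p (r * p) 1 (- u) m = p ^ (tri m) * poch r u m.
Proof.
  induction m; simpl pq_pow; simpl tri; simpl poch. ring.
  rewrite IHm, pow_add, Rpow_mult_distr. ring.
Qed.

Lemma m_nk_eq n k x : m_nk p (r * p) n k x = Mk r n x k.
Proof.
  unfold m_nk, Mk. rewrite tri_div1, pq_binom_eq, pq_pow_eq.
  replace (n + 1)%nat with (S n) by lia. rewrite pow_add.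
  pose proof (ppos (k * n)); pose proof (ppos (tri (S n))).
  field. split; apply Rgt_not_eq; lra.
Qed.

Lemma b_nk_eq n k u : (1 <= n)%nat ->
  b_nk p (r * p) n k u = p ^ k * p ^ k * Qb r (S n) k * u ^ k * poch r u n.
Proof.
  intros Hn. unfold b_nk. rewrite tri_div2.
  replace (Z.of_nat k * (Z.of_nat n - 1) + Z.of_nat (tri n))%Z
    with (Z.of_nat (k * (n - 1) + tri n)) by (rewrite Nat2Z.inj_add, Nat2Z.inj_mul, Nat2Z.inj_sub by lia; simpl; lia).
  rewrite <- pow_powerRZ.
  replace (n + k + 1)%nat with (S n + k)%nat by lia.
  rewrite pq_binom_eq, pq_pow_eq.
  replace (k * S n)%nat with (k * (n - 1) + k + k)%nat by nia.
  rewrite !pow_add.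
  pose proof (ppos (k * (n - 1))); pose proof (ppos (tri n)); pose proof (ppos k).
  field. split; apply Rgt_not_eq; lra.
Qed.

Lemma Mtilde_nf n f x : (1 <= n)%nat -> x <> 1 ->
  Mtilde p (r * p) n f x =
  Series (fun k => (qi r (S n) * Mk r n x k * (1 - r) * Qb r (S n) k) *
                   Series (fun j => Hw r n k j * f (r ^ j / p))).
Proof.
  intros Hn Hx. unfold Mtilde. destruct (Req_EM_T x 1) as [E|_]; [contradiction|].
  rewrite pq_int_eq. rewrite <- Series_scal_l. apply Series_ext. intros k.
  unfold pq_integral. rewrite m_nk_eq.
  assert (Ej : forall j, (r * p) ^ j / p ^ S j *
      (b_nk p (r * p) n k (r * p * ((r * p) ^ j / p ^ S j * 1)) * f ((r * p) ^ j / p ^ S j * 1))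
      = (p ^ k * p ^ k * Qb r (S n) k * r ^ k / p) * (Hw r n k j * f (r ^ j / p))).
  { intros j.
    assert (Et : (r * p) ^ j / p ^ S j * 1 = r ^ j / p).
    { rewrite Rpow_mult_distr. simpl pow. pose proof (ppos j). field. split; lra. }
    rewrite Et. rewrite b_nk_eq by auto.
    replace (r * p * (r ^ j / p)) with (r ^ (S j)) by (simpl; field; lra).
    unfold Hw. rewrite <- !pow_mult.
    replace (S j * k)%nat with (k + j * k)%nat by lia.
    replace (S k * j)%nat with (j + j * k)%nat by lia.
    rewrite !pow_add, Rpow_mult_distr. simpl pow.
    pose proof (ppos j). field. split; lra. }
  rewrite (Series_ext _ _ Ej). rewrite Series_scal_l.
  rewrite !Rpow_mult_distr.
  pose proof (ppos k); pose proof (pow_lt r k ltac:(lra)).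
  replace (n + 1)%nat with (S n) by lia. simpl pow.
  pose proof (ppos n).
  field. repeat split; apply Rgt_not_eq; lra.
Qed.
End N.


Lemma main_bound (pn r : R) (n : nat) (f : R -> R) (x eps' K : R) :
  0 < pn <= 1 -> 1 / 2 <= pn -> 0 < r < 1 -> (1 <= n)%nat -> 0 <= x < 1 ->
  0 <= eps' -> 0 <= K ->
  (forall u, 0 <= u <= 2 -> Rabs (f u - f x) <= eps' + K * (u - x) ^ 2) ->
  Rabs (Mtilde pn (r * pn) n f x - f x) <=
    eps' + K * (((/ pn) ^ 2 + 16) * / qi r n + 2 * (/ pn - 1) ^ 2).
Proof.
  intros Hp Hp2 Hr Hn Hx He HK Hf.
  rewrite Mtilde_nf by (auto; lra).
  set (P := / pn).
  assert (HP1 : 1 <= P).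
  { unfold P. rewrite <- Rinv_1. apply Rinv_le_contravar; lra. }
  assert (HP2 : P <= 2).
  { unfold P. replace 2 with (/ (1/2)) by field. apply Rinv_le_contravar; lra. }
  set (i := / qi r n).
  set (e := fun k => mu1 r n k * (mu1 r n k + (mu2f r n k - mu1 r n k)) * P ^ 2
                     - 2 * x * mu1 r n k * P + x ^ 2).
  set (D := (P ^ 2 + 16) * i + 2 * (P - 1) ^ 2).
  set (d := fun k => D + 4 * (Yk r n k * Yk' r n k - 2 * x * Yk r n k + x ^ 2)).
  apply (abstract_bound _ (Hw r n) (fun j => r ^ j / pn) (fun k => Bv r k n) (Mk r n x) e d).
  - intros k. pose proof (qi_pos r Hr (S n) ltac:(lia)). pose proof (Mk_nonneg r Hr n x Hx k).
    pose proof (Qb_pos r Hr (S n) k).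
    apply Rmult_le_pos; [apply Rmult_le_pos; [apply Rmult_le_pos|]|]; lra.
  - intros k j; apply Hw_nonneg; auto.
  - intros k; apply beta_series; auto.
  - intros k.
    apply (is_series_extR (fun j => P ^ 2 * Hw r n (S (S k)) j + (- (2 * x * P)) * Hw r n (S k) j
                                   + x ^ 2 * Hw r n k j)).
    { intros j. rewrite !Hw_S by auto. unfold Rdiv. fold P. ring. }
    eapply is_series_eqv.
    { apply (is_series_plus (fun j => P ^ 2 * Hw r n (S (S k)) j + (- (2 * x * P)) * Hw r n (S k) j)
                            (fun j => x ^ 2 * Hw r n k j)).
      apply (is_series_plus (fun j => P ^ 2 * Hw r n (S (S k)) j) (fun j => (- (2 * x * P)) * Hw r n (S k) j)).
      apply (is_series_scal_l (P ^ 2) (Hw r n (S (S k)))). apply beta_series; auto.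
      apply (is_series_scal_l (- (2 * x * P)) (Hw r n (S k))). apply beta_series; auto.
      apply (is_series_scal_l (x ^ 2) (Hw r n k)). apply beta_series; auto. }
    unfold plus, scal; simpl; unfold mult; simpl.
    rewrite (Bv_S r Hr (S k) n), (Bv_S r Hr k n).
    unfold e, mu1, mu2f. rewrite Nat.add_succ_r. ring.
  - intros k. unfold Bv, Mk. replace (n + k + 1)%nat with (S n + k)%nat by lia.
    unfold Qb. simpl qf.
    pose proof (qf_pos r Hr (n + k)); pose proof (qf_pos r Hr n); pose proof (qf_pos r Hr k).
    pose proof (qi_pos r Hr (S n) ltac:(lia)); pose proof (qi_pos r Hr (S (n + k)) ltac:(lia)).
    field. repeat split; apply Rgt_not_eq; lra.
  - intros k; apply Mk_nonneg; auto.
  - apply Mk_sum; auto.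
  - intros k. unfold e, d, D.
    apply pure_ineq; auto.
    + apply F1a; auto.
    + apply F1b; auto.
    + apply F2; auto.
    + apply (F3 r Hr n Hn k).
    + apply (F3 r Hr n Hn k).
    + lra.
  - apply (is_series_extR (fun k => (D + 4 * x ^ 2) * Mk r n x k
                                  + 4 * (Mk r n x k * Yk r n k * Yk' r n k)
                                  + (- (8 * x)) * (Mk r n x k * Yk r n k))).
    { intros k; unfold d; ring. }
    eapply is_series_eqv.
    { apply (is_series_plus (fun k => (D + 4 * x ^ 2) * Mk r n x k + 4 * (Mk r n x k * Yk r n k * Yk' r n k))
                            (fun k => (- (8 * x)) * (Mk r n x k * Yk r n k))).
      apply (is_series_plus (fun k => (D + 4 * x ^ 2) * Mk r n x k) (fun k => 4 * (Mk r n x k * Yk r n k * Yk' r n k))).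
      apply (is_series_scal_l (D + 4 * x ^ 2) (Mk r n x)). apply Mk_sum; auto.
      apply (is_series_scal_l 4 (fun k => Mk r n x k * Yk r n k * Yk' r n k)). apply Mk_yy; auto.
      apply (is_series_scal_l (- (8 * x)) (fun k => Mk r n x k * Yk r n k)). apply Mk_y; auto. }
    unfold plus, scal; simpl; unfold mult; simpl. ring.
  - auto.
  - auto.
  - intros j. apply Hf. pose proof (pow_pos01 r j ltac:(lra)).
    split. unfold Rdiv. apply Rmult_le_pos; [lra|]. left; apply Rinv_0_lt_compat; lra.
    unfold Rdiv. fold P. nra.
Qed.


Theorem theorem2 (p q : nat -> R) (a b : R)
  (hq : forall n, 0 < q n < 1)
  (hp : forall n, q n < p n <= 1)
  (hp1 : is_lim_seq p (Finite 1))
  (hq1 : is_lim_seq q (Finite 1))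
  (ha : is_lim_seq (fun n => p n ^ n) (Finite a))
  (hb : is_lim_seq (fun n => q n ^ n) (Finite b))
  (hn : is_lim_seq (fun n => / pq_int (p n) (q n) n) (Finite 0))
  (f : R -> R) (hf : forall t, continuous f t) :
  forall eps : R, 0 < eps ->
    exists N : nat, forall n : nat, (N <= n)%nat ->
      forall x : R, 0 <= x <= 1 ->
        Rabs (Mtilde (p n) (q n) n f x - f x) < eps.
Proof.
  intros eps Heps.
  assert (Hc : forall t, continuity_pt f t) by (intros t; apply continuity_pt_filterlim, hf).
  destruct (Heine f (fun c => 0 <= c <= 2) (compact_P3 0 2) (fun t _ => Hc t)
              (mkposreal (eps / 2) ltac:(lra))) as [dl Hdl].
  destruct (continuity_ab_maj f 0 2 ltac:(lra) (fun t _ => Hc t)) as [Mx [HMx _]].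
  destruct (continuity_ab_min f 0 2 ltac:(lra) (fun t _ => Hc t)) as [mx [Hmx _]].
  set (Mb := Rabs (f Mx) + Rabs (f mx)).
  assert (HMb : forall c, 0 <= c <= 2 -> Rabs (f c) <= Mb).
  { intros c Hc2. specialize (HMx c Hc2). specialize (Hmx c Hc2). unfold Mb.
    apply Rabs_le. pose proof (Rabs_pos (f Mx)); pose proof (Rabs_pos (f mx)).
    pose proof (Rle_abs (f Mx)); pose proof (Rle_abs (- f mx)) as Hm2. rewrite Rabs_Ropp in Hm2.
    lra. }
  pose proof (cond_pos dl) as Hdl0.
  set (K := 2 * Mb / (dl * dl)).
  assert (HMb0 : 0 <= Mb) by (unfold Mb; pose proof (Rabs_pos (f Mx)); pose proof (Rabs_pos (f mx)); lra).
  assert (HK : 0 <= K) by (unfold K; apply Rdiv_le_0_compat; nra).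
  assert (Hfb : forall u v, 0 <= u <= 2 -> 0 <= v <= 2 -> Rabs (f u - f v) <= eps / 2 + K * (u - v) ^ 2).
  { intros u v Hu Hv.
    assert (0 <= K * (u - v) ^ 2) by (apply Rmult_le_pos; [lra | apply pow2_ge_0]).
    destruct (Rlt_or_le (Rabs (u - v)) dl) as [Hlt|Hge].
    - specialize (Hdl u v Hu Hv Hlt). simpl in Hdl. lra.
    - assert (dl * dl <= (u - v) ^ 2).
      { rewrite <- pow2_abs. simpl. rewrite Rmult_1_r. apply Rmult_le_compat; lra. }
      assert (K * (u - v) ^ 2 >= 2 * Mb).
      { unfold K. apply Rle_ge. apply Rmult_le_reg_r with (dl * dl). nra.
        replace (2 * Mb / (dl * dl) * (u - v) ^ 2 * (dl * dl)) with (2 * Mb * (u - v) ^ 2) by (field; lra).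
        nra. }
      pose proof (HMb u Hu); pose proof (HMb v Hv).
      pose proof (Rabs_triang (f u) (- f v)) as Ht. rewrite Rabs_Ropp in Ht. unfold Rminus. lra. }
  set (eta := Rmin (1 / 2) (eps / (56 * K + 1))).
  assert (Heta0 : 0 < eta).
  { unfold eta. apply Rmin_pos. lra. apply Rdiv_lt_0_compat; lra. }
  assert (Heta1 : eta <= 1 / 2) by apply Rmin_l.
  assert (Heta2 : eta <= eps / (56 * K + 1)) by apply Rmin_r.
  apply is_lim_seq_spec in hp1. apply is_lim_seq_spec in hn.
  destruct (hp1 (mkposreal eta Heta0)) as [N1 HN1].
  destruct (hn (mkposreal eta Heta0)) as [N2 HN2].
  exists (N1 + N2 + 1)%nat. intros n Hn x Hx.
  specialize (HN1 n ltac:(lia)). specialize (HN2 n ltac:(lia)). simpl in HN1, HN2.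
  destruct (Req_EM_T x 1) as [Ex|Nx].
  - unfold Mtilde. destruct (Req_EM_T x 1); [|contradiction]. subst x.
    rewrite Rminus_diag, Rabs_R0. lra.
  - pose proof (hq n); pose proof (hp n).
    set (pn := p n) in *. set (r := q n / pn).
    assert (Hpn : 0 < pn <= 1) by lra.
    assert (Hqr : q n = r * pn) by (unfold r; field; lra).
    assert (Hr : 0 < r < 1).
    { unfold r. split. apply Rdiv_lt_0_compat; lra.
      apply Rmult_lt_reg_r with pn; [lra|]. unfold Rdiv. rewrite Rmult_assoc, Rinv_l; lra. }
    apply Rabs_lt_between in HN1.
    assert (Hp2 : 1 / 2 <= pn) by lra.
    rewrite Hqr in HN2 |- *.
    assert (Hn1 : (1 <= n)%nat) by lia.
    pose proof (main_bound pn r n f x (eps / 2) K Hpn Hp2 Hr Hn1 ltac:(lra) ltac:(lra) HK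
                (fun u Hu => Hfb u x Hu ltac:(lra))) as HM.
    set (D := ((/ pn) ^ 2 + 16) * / qi r n + 2 * (/ pn - 1) ^ 2) in HM.
    assert (HD : D <= 28 * eta).
    { unfold D.
      assert (Hi : / qi r n <= / pq_int pn (r * pn) n).
      { rewrite pq_int_eq by auto. pose proof (qi_pos r Hr n Hn1).
        assert (pn ^ n <= pn).
        { destruct n; [lia|]. simpl. pose proof (pow01 pn n ltac:(lra)). nra. }
        assert (0 < pn ^ n) by (apply pow_lt; lra).
        apply Rinv_le_contravar. apply Rdiv_lt_0_compat; [nra|lra].
        apply Rmult_le_reg_r with pn; [lra|].
        replace (pn ^ n * qi r n / pn * pn) with (pn ^ n * qi r n) by (field; lra). nra. }
      rewrite Rminus_0_r in HN2. apply Rabs_lt_between in HN2.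
      assert (HP2 : / pn <= 2).
      { replace 2 with (/ (1/2)) by field. apply Rinv_le_contravar; lra. }
      assert (HP1 : 1 <= / pn).
      { rewrite <- Rinv_1. apply Rinv_le_contravar; lra. }
      assert (0 <= / qi r n) by (left; apply Rinv_0_lt_compat, qi_pos; auto).
      assert (Hx1 : / pn - 1 <= 2 * eta).
      { replace (/ pn - 1) with ((1 - pn) / pn) by (field; lra).
        apply Rmult_le_reg_r with pn; [lra|].
        replace ((1 - pn) / pn * pn) with (1 - pn) by (field; lra). nra. }
      assert (((/ pn) ^ 2 + 16) * / qi r n <= 20 * eta).
      { assert ((/ pn) ^ 2 <= 4) by nra.
        assert (((/ pn) ^ 2 + 16) * / qi r n <= 20 * / qi r n) by (apply Rmult_le_compat_r; lra).
        lra. }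
      assert ((/ pn - 1) ^ 2 <= 4 * eta) by nra.
      lra. }
    assert (K * D <= K * (28 * eta)) by (apply Rmult_le_compat_l; auto).
    assert (K * (28 * eta) < eps / 2).
    { assert (K * (28 * eta) <= K * (28 * (eps / (56 * K + 1)))) by (apply Rmult_le_compat_l; lra).
      assert (K * (28 * (eps / (56 * K + 1))) < eps / 2).
      { apply Rmult_lt_reg_r with (56 * K + 1). lra.
        replace (K * (28 * (eps / (56 * K + 1))) * (56 * K + 1)) with (28 * K * eps) by (field; lra).
        nra. }
      lra. }
    assert (Hx' : 0 <= x < 1) by (destruct Hx as [Hx0 Hx1]; split; [lra|]; destruct Hx1 as [Hlt|Heq]; [lra|contradiction]).
    lra.
Qed.
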